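(* For all $n\ge1$, $a_{\{0102,0121\}}(n)=\frac12\left(3\cdot2^n-n^2-n-2\right)$.
   Context: An ascent in an integer sequence $s_1\cdots s_m$ is an index $j$ with $s_j<s_{j+1}$; $\mathrm{asc}$ denotes the number of ascents. An ascent sequence is a sequence $x_1\cdots x_n$ of nonnegative integers with $x_1=0$ and $x_i\le 1+\mathrm{asc}(x_1\cdots x_{i-1})$ for all $i\ge2$. The reduction $\mathrm{red}(w)$ of an integer sequence $w$ replaces the $i$-th smallest distinct letter of $w$ by $i-1$; a pattern is a reduced sequence. A sequence $x$ contains a pattern $p=p_1\cdots p_k$ if there are indices $i_1<\cdots<i_k$ with $\mathrm{red}(x_{i_1}\cdots x_{i_k})=p$; otherwise $x$ avoids $p$. For a finite set $P$ of patterns, $a_P(n)$ denotes the number of ascent sequences of length $n$ avoiding every pattern in $P$. *)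

(* Defs.v *)
From mathcomp Require Import all_boot.
Set Implicit Arguments. Unset Strict Implicit. Unset Printing Implicit Defensive.

Fixpoint asc (s : seq nat) : nat :=
  match s with
  | a :: ((b :: _) as t) => (a < b) + asc t
  | _ => 0
  end.

(* ascent sequence x_1 ... x_n (n >= 1): x_1 = 0 and
   x_i <= 1 + asc(x_1 ... x_{i-1}) for all i >= 2.
   (0-based: nth 0 x 0 = 0 and, for 1 <= i < size x,
    nth 0 x i <= 1 + asc (take i x).) *)
Definition is_ascent_seq (x : seq nat) : bool :=
  (0 < size x) && (nth 0 x 0 == 0) &&
  [forall i : 'I_(size x), (0 < i) ==> (nth 0 x i <= (asc (take i x)).+1)].

Definition red (w : seq nat) : seq nat :=
  map (fun a => index a (sort leq (undup w))) w.

(* x contains p: for some choice of indices i_1 < ... < i_k, encoded by a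
   0/1 mask of length size x, red (x_{i_1} ... x_{i_k}) = p *)
Definition contains (x p : seq nat) : bool :=
  [exists m : (size x).-tuple bool, red (mask m x) == p].

Definition avoids_all (P : seq (seq nat)) (x : seq nat) : bool :=
  all (fun p => ~~ contains x p) P.

(* a_P(n): number of ascent sequences of length n avoiding every pattern of P.
   Every ascent sequence of length n has all entries <= n-1 (x_i <= i-1),
   so enumerating n-tuples with entries in 'I_n loses nothing. *)
Definition aP (P : seq (seq nat)) (n : nat) : nat :=
  #|[set t : n.-tuple 'I_n | is_ascent_seq (map val t) && avoids_all P (map val t)]|.

(* Main.v *)
Require Import Defs.
From mathcomp Require Import all_boot zify.
Set Implicit Arguments. Unset Strict Implicit. Unset Printing Implicit Defensive.

Lemma containsP x p : contains x p <-> exists s, subseq s x /\ red s = p.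
Proof.
split.
  case/existsP=> m /eqP <-; exists (mask m x); split=> //; exact: mask_subseq.
case=> s [/subseqP [m Hm ->] <-]; apply/existsP.
have Hm' : size m == size x by apply/eqP.
by exists (Tuple Hm').
Qed.

Lemma red_facts s u : u = sort leq (undup s) ->
  [/\ red s = map (index^~ u) s, forall a, a \in s -> a \in u,
      forall a, a \in s -> nth 0 u (index a u) = a &
      forall i j, i < j < size u -> nth 0 u i < nth 0 u j].
Proof.
move=> Hu; split; first by rewrite Hu.
- by move=> a; rewrite Hu mem_sort mem_undup.
- by move=> a Ha; rewrite nth_index // Hu mem_sort mem_undup.
move=> i j /andP [Hij Hj].
have Hs : sorted ltn u.
  by rewrite ltn_sorted_uniq_leq Hu sort_uniq undup_uniq sort_sorted //; exact: leq_total.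
apply: (sorted_ltn_nth ltn_trans 0 Hs) => //; rewrite inE //; exact: ltn_trans Hij Hj.
Qed.

Lemma red_by s u : sorted ltn u -> perm_eq (undup s) u -> red s = map (index^~ u) s.
Proof.
move=> Hs Hp; rewrite /red; apply: eq_map => a; congr index.
apply: (sorted_eq leq_trans anti_leq (sort_sorted leq_total _)).
  by apply: sub_sorted Hs => x y /ltnW.
by rewrite perm_sort.
Qed.

Lemma red_0102 s : red s = [:: 0; 1; 0; 2] <-> exists a b d, s = [:: a; b; a; d] /\ a < b < d.
Proof.
split.
  have [Hr Hm Hn Hlt] := red_facts (erefl (sort leq (undup s))).
  move: (sort leq (undup s)) Hr Hm Hn Hlt => u Hr Hm Hn Hlt.
  move=> E; have Hsz : size s = 4 by rewrite -(size_map (index^~ u)) -Hr E.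
  case: s Hsz Hr Hm Hn Hlt E => [|a [|b [|c [|d [|]]]]] // _ Hr Hm Hn Hlt.
  rewrite Hr /= => [[Ea Eb Ec Ed]].
  have ma : nth 0 u 0 = a by rewrite -{2}Ea Hn // !inE eqxx.
  have mb : nth 0 u 1 = b by rewrite -Eb Hn // !inE eqxx ?orbT.
  have mc : nth 0 u 0 = c by rewrite -{2}Ec Hn // !inE eqxx ?orbT.
  have md : nth 0 u 2 = d by rewrite -Ed Hn // !inE eqxx ?orbT.
  have H2 : 2 < size u by rewrite -Ed index_mem Hm // !inE eqxx ?orbT.
  exists a, b, d; split; first by rewrite -ma -mc.
  by rewrite -ma -mb -md !Hlt // ?H2 // (ltn_trans _ H2).
case=> a [b [d [-> /andP [Hab Hbd]]]].
have Hab' : (a == b) = false by apply/negbTE; rewrite neq_ltn Hab.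
have Had : (a == d) = false by apply/negbTE; rewrite neq_ltn (ltn_trans Hab Hbd).
have Hbd' : (b == d) = false by apply/negbTE; rewrite neq_ltn Hbd.
rewrite (red_by (u := [:: a; b; d])) /=.
- by rewrite eq_sym Hab' eq_sym Had eq_sym Hbd' !eqxx.
- by rewrite Hab Hbd.
rewrite !inE !eqxx Hab' Had Hbd' /= ?orbF ?orbT eq_sym Hab'.
by apply/permPl; exact: (perm_catCA [:: b] [:: a] [:: d]).
Qed.

Lemma red_0121 s : red s = [:: 0; 1; 2; 1] <-> exists a b c, s = [:: a; b; c; b] /\ a < b < c.
Proof.
split.
  have [Hr Hm Hn Hlt] := red_facts (erefl (sort leq (undup s))).
  move: (sort leq (undup s)) Hr Hm Hn Hlt => u Hr Hm Hn Hlt.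
  move=> E; have Hsz : size s = 4 by rewrite -(size_map (index^~ u)) -Hr E.
  case: s Hsz Hr Hm Hn Hlt E => [|a [|b [|c [|d [|]]]]] // _ Hr Hm Hn Hlt.
  rewrite Hr /= => [[Ea Eb Ec Ed]].
  have ma : nth 0 u 0 = a by rewrite -{2}Ea Hn // !inE eqxx.
  have mb : nth 0 u 1 = b by rewrite -Eb Hn // !inE eqxx ?orbT.
  have mc : nth 0 u 2 = c by rewrite -Ec Hn // !inE eqxx ?orbT.
  have md : nth 0 u 1 = d by rewrite -Ed Hn // !inE eqxx ?orbT.
  have H2 : 2 < size u by rewrite -Ec index_mem Hm // !inE eqxx ?orbT.
  exists a, b, c; split; first by rewrite -mb -md.
  by rewrite -ma -mb -mc !Hlt // ?H2 // (ltn_trans _ H2).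
case=> a [b [c [-> /andP [Hab Hbc]]]].
have Hab' : (a == b) = false by apply/negbTE; rewrite neq_ltn Hab.
have Hac : (a == c) = false by apply/negbTE; rewrite neq_ltn (ltn_trans Hab Hbc).
have Hbc' : (b == c) = false by apply/negbTE; rewrite neq_ltn Hbc.
rewrite (red_by (u := [:: a; b; c])) /=.
- by rewrite eq_sym Hab' eq_sym Hac eq_sym Hbc' !eqxx.
- by rewrite Hab Hbc.
rewrite !inE !eqxx Hab' Hac Hbc' /= ?orbF ?orbT eq_sym Hbc' perm_cons.
by apply/permPl; exact: (perm_catCA [:: c] [:: b] [::]).
Qed.

Lemma asc_rcons a x v : asc (rcons (a :: x) v) = asc (a :: x) + (last a x < v).
Proof.
elim: x a => [|b x IH] a; first by rewrite /= addn0.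
have := IH b; rewrite !rcons_cons /= => ->; by rewrite addnA.

Qed.

Lemma asc_le s : asc s <= (size s).-1.
Proof.
elim: s => [|a [|b s] IH] //=.
move: IH => /=; case: (a < b) => /=; lia.
Qed.

Lemma is_asc_alt x : is_ascent_seq x = [&& 0 < size x, nth 0 x 0 == 0 &
  all (fun i => nth 0 x i <= (asc (take i x)).+1) (iota 1 (size x).-1)].
Proof.
rewrite /is_ascent_seq -andbA; congr [&& _, _ & _].
apply/forallP/allP.
  move=> H i; rewrite mem_iota => /andP [Hi1 Hi2].
  have Hi : i < size x by lia.
  by move: (H (Ordinal Hi)); rewrite /= Hi1.
move=> H i; apply/implyP => Hi; apply: H; rewrite mem_iota Hi /=.
have := ltn_ord i; lia.
Qed.

Lemma is_asc_rcons x v : x != [::] ->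
  is_ascent_seq (rcons x v) = is_ascent_seq x && (v <= (asc x).+1).
Proof.
case: x => [|a x] // _.
rewrite !is_asc_alt size_rcons succnK -andbA -andbA; congr [&& _, _ & _].
have -> : size (a :: x) = (size (a :: x)).-1 + 1 by rewrite addn1.
rewrite iotaD all_cat addn1 all_seq1.
have -> : take (size (a :: x)) (rcons (a :: x) v) = a :: x.
  by rewrite -cats1 takel_cat // take_size.
rewrite nth_rcons ltnn eqxx; congr (_ && _).
apply: eq_in_all => i; rewrite mem_iota => /andP [H1 H2].
have H3 : i < size (a :: x) by move: H2; rewrite /= add1n.
rewrite nth_rcons H3 -cats1 takel_cat // ltnW //.
Qed.

Lemma subseq_rcons2 (s x : seq nat) d v :
  subseq (rcons s d) (rcons x v) = subseq (rcons s d) x || ((d == v) && subseq s x).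
Proof.
rewrite -subseq_rev -[subseq (rcons s d) x]subseq_rev -[subseq s x]subseq_rev !rev_rcons /=.
case: eqP => [->|_] /=; last by rewrite orbF.
by case H: (subseq (v :: _) _) => //=; rewrite (cons_subseq H).
Qed.

Definition C1 x := exists a b d, subseq [:: a; b; a; d] x /\ a < b < d.
Definition C2 x := exists a b c, subseq [:: a; b; c; b] x /\ a < b < c.
Definition N1 x v := exists a b, subseq [:: a; b; a] x /\ a < b < v.
Definition N2 x v := exists a c, subseq [:: a; v; c] x /\ a < v < c.

Lemma C1_rcons x v : C1 (rcons x v) <-> C1 x \/ N1 x v.
Proof.
split.
  case=> a [b [d [H Hl]]]; move: H.
  rewrite (subseq_rcons2 [:: a; b; a]) => /orP [H|/andP [/eqP Hd H]].
    by left; exists a, b, d.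
  by right; exists a, b; rewrite -Hd.
case=> [[a [b [d [H Hl]]]]|[a [b [H Hl]]]].
  exists a, b, d; split=> //; apply: subseq_trans H (subseq_rcons _ _).
exists a, b, v; split=> //.
by rewrite (subseq_rcons2 [:: a; b; a]) eqxx H orbT.
Qed.

Lemma C2_rcons x v : C2 (rcons x v) <-> C2 x \/ N2 x v.
Proof.
split.
  case=> a [b [c [H Hl]]]; move: H.
  rewrite (subseq_rcons2 [:: a; b; c]) => /orP [H|/andP [/eqP Hd H]].
    by left; exists a, b, c.
  by right; exists a, c; rewrite -Hd.
case=> [[a [b [c [H Hl]]]]|[a [c [H Hl]]]].
  exists a, b, c; split=> //; apply: subseq_trans H (subseq_rcons _ _).
exists a, v, c; split=> //.
by rewrite (subseq_rcons2 [:: a; v; c]) eqxx H orbT.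
Qed.

Lemma contains1 x : contains x [:: 0; 1; 0; 2] <-> C1 x.
Proof.
rewrite containsP; split.
  by case=> s [H /red_0102 [a [b [d [E Hl]]]]]; exists a, b, d; rewrite -E.
case=> a [b [d [H Hl]]]; exists [:: a; b; a; d]; split=> //.
by apply/red_0102; exists a, b, d.
Qed.

Lemma contains2 x : contains x [:: 0; 1; 2; 1] <-> C2 x.
Proof.
rewrite containsP; split.
  by case=> s [H /red_0121 [a [b [c [E Hl]]]]]; exists a, b, c; rewrite -E.
case=> a [b [c [H Hl]]]; exists [:: a; b; c; b]; split=> //.
by apply/red_0121; exists a, b, c.
Qed.

Definition PP := [:: [:: 0; 1; 0; 2]; [:: 0; 1; 2; 1]].
Definition Q x := is_ascent_seq x && avoids_all PP x.

Lemma QP x : Q x <-> [/\ is_ascent_seq x, ~ C1 x & ~ C2 x].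
Proof.
rewrite /Q /avoids_all /= andbT.
split.
  by case/and3P => -> /negP H1 /negP H2; split=> // H; [apply: H1 | apply: H2]; [apply/contains1 | apply/contains2].
case=> -> H1 H2; apply/and3P; split=> //; apply/negP.
  by move/contains1.
by move/contains2.
Qed.

Lemma Q1 v : Q [:: v] = (v == 0).
Proof.
apply/idP/idP.
  by case/QP; rewrite is_asc_alt => /and3P [_ H _].
move=> /eqP ->; apply/QP; split; first by rewrite is_asc_alt.
- by case=> a [b [d [/size_subseq]]].
- by case=> a [b [d [/size_subseq]]].
Qed.

Lemma Q_rcons x v : x != [::] ->
  (Q (rcons x v) <-> [/\ Q x, v <= (asc x).+1, ~ N1 x v & ~ N2 x v]).
Proof.
move=> Hx; have E1 := C1_rcons x v; have E2 := C2_rcons x v.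
have E3 := QP x; have E4 := QP (rcons x v).
have E5 := is_asc_rcons v Hx.
split.
  case/E4; rewrite E5 => /andP [H1 H2] H3 H4; split=> //; try tauto.
  apply/E3; split=> // H; [apply: H3 | apply: H4]; [apply/E1 | apply/E2]; by left.
case=> /E3 [H1 H3 H4] H2 H5 H6; apply/E4; split; [by rewrite E5 H1 H2| tauto | tauto].
Qed.

Inductive state := Init | P1 of nat | SB | SC | Dead.

Definition step (s : state) (v : nat) : state :=
  match s with
  | Init => if v == 0 then P1 0 else Dead
  | P1 m => if v == m then P1 m else if v == m.+1 then P1 m.+1
            else if v == 0 then (if m == 1 then SB else SC) else Dead
  | SB => if v <= 1 then SB else Dead
  | SC => if v == 0 then SC else Dead
  | Dead => Dead
  end.

Definition st (x : seq nat) := foldl step Init x.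

Definition Inv (s : state) (x : seq nat) : Prop :=
  match s with
  | Init => x = [::]
  | P1 m => [/\ Q x && sorted leq x, all (fun a => a <= m) x, asc x = m,
             (exists y, x = 0 :: y /\ last 0 y = m) &
             forall w, 0 < w < m -> subseq [:: 0; w; m] x]
  | SB => [/\ Q x, all (fun a => a <= 1) x, subseq [:: 0; 1; 0] x & 0 < asc x]
  | SC => [/\ Q x, subseq [:: 0; 1; 0] x & (exists c, 1 < c /\ subseq [:: 0; 1; c] x)]
  | Dead => ~~ Q x /\ x != [::]
  end.

Lemma noN1_sorted x v : sorted leq x -> ~ N1 x v.
Proof.
move=> Hs [a [b [H /andP [Hab _]]]].
have := subseq_sorted leq_trans H Hs; rewrite /= => /and3P [_ H2 _].
by move: Hab; rewrite ltnNge H2.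
Qed.

Lemma noN1_le1 x v : v <= 1 -> ~ N1 x v.
Proof. by move=> Hv [a [b [_ /andP [H1 H2]]]]; lia. Qed.

Lemma noN2_bound x m v : all (fun a => a <= m) x -> m <= v -> ~ N2 x v.
Proof.
move=> /allP Ha Hv [a [c [H /andP [_ Hc]]]].
have : c \in x by apply: (mem_subseq H); rewrite !inE eqxx !orbT.
by move/Ha; lia.
Qed.

Lemma noN2_0 x : ~ N2 x 0.
Proof. by case=> a [c [_ /andP [H _]]]. Qed.

Lemma asc_rcons_ge y v : asc y <= asc (rcons y v).
Proof. by case: y => [|a y] //; rewrite asc_rcons leq_addr. Qed.

Lemma P1_0m x m : 0 < m -> (exists y, x = 0 :: y /\ last 0 y = m) -> subseq [:: 0; m] x.
Proof.
move=> Hm [[|b y] [-> Hl]] /=; first by move: Hl Hm => /= <-.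
have : m \in b :: y by rewrite -Hl; exact: mem_last.
rewrite -sub1seq => H; exact: (cat_subseq (subseq_refl [:: 0]) H).
Qed.

Lemma Inv_init : Inv (st [::]) [::].
Proof. by []. Qed.

Lemma Inv_step x v : Inv (st x) x -> Inv (st (rcons x v)) (rcons x v).
Proof.
rewrite /st foldl_rcons -/(st x).
case: (st x) => [|m||| ] /=.
- move=> ->; rewrite /=; case: eqP => [->|Hv].
    split=> //; first by rewrite Q1.
    by exists [::].
    by move=> w; lia.
  by split=> //; rewrite Q1; apply/eqP.
- case=> /andP [HQ Hs] Ha Hasc Hh Hsub.
  have Hne : x != [::] by case: Hh => y [-> _].
  have Hsr : forall w, m <= w -> sorted leq (rcons x w).
    move=> w Hw; case: (Hh) => y [Ex Hl]; move: Hs; rewrite Ex /= rcons_path => ->.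
    by rewrite Hl.
  have Has : forall w, asc (rcons x w) = m + (m < w).
    by move=> w; case: (Hh) => y [Ex Hl]; move: Hasc; rewrite Ex asc_rcons Hl => ->.
  case: eqP => [->|Hvm].
    split.
    + apply/andP; split; last exact: Hsr.
      apply/Q_rcons => //; split=> //; [lia | exact: noN1_sorted | exact: (noN2_bound Ha)].
    + by rewrite all_rcons leqnn.
    + by rewrite Has ltnn addn0.
    + by case: Hh => y [-> Hl]; exists (rcons y m); rewrite last_rcons.
    + by move=> w Hw; apply: subseq_trans (Hsub w Hw) (subseq_rcons _ _).
  case: eqP => [->|Hvm1].
    split.
    + apply/andP; split; last exact: Hsr.
      apply/Q_rcons => //; split=> //; [lia | exact: noN1_sorted | exact: (noN2_bound Ha)].
    + rewrite all_rcons leqnn /=; apply: sub_all Ha => a /= Ha'; lia.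
    + by rewrite Has ltnSn addn1.
    + by case: Hh => y [-> Hl]; exists (rcons y m.+1); rewrite last_rcons.
    + move=> w Hw; rewrite (subseq_rcons2 [:: 0; w]) eqxx /=; apply/orP; right.
      have [Hwm|Hwm] : w < m \/ w = m by lia.
        apply: subseq_trans (Hsub w _) => //; last lia.
        exact: (subseq_rcons [:: 0; w] m).
      by rewrite Hwm; apply: P1_0m => //; lia.
  case: eqP => [Hv0|Hv0].
    have Hm0 : 0 < m by move: Hvm; rewrite Hv0; lia.
    have HQ' : Q (rcons x v).
      apply/Q_rcons => //; split=> //; [lia | exact: noN1_sorted | by rewrite Hv0; exact: noN2_0].
    case: eqP => [Hm1|Hm1].
      split=> //.
      + by rewrite all_rcons Hv0 /=; rewrite -Hm1.
      + by rewrite (subseq_rcons2 [:: 0; 1]) Hv0 eqxx /= -{2}Hm1 P1_0m ?orbT.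
      + by rewrite Has; lia.
    split=> //.
    + rewrite (subseq_rcons2 [:: 0; 1]) Hv0 eqxx /=; apply/orP; right.
      apply: subseq_trans (Hsub 1 _); last lia.
      exact: (subseq_rcons [:: 0; 1] m).
    + exists m; split; first lia.
      by apply: subseq_trans (Hsub 1 _) (subseq_rcons _ _); lia.
  split=> //; last by rewrite -size_eq0 size_rcons.
  apply/negP => /Q_rcons [] // _ H1 _ H2.
  have [Hvl|Hvl] : v < m \/ m.+1 < v by lia.
    by apply: H2; exists 0, m; split; [apply: Hsub; lia | lia].
  by move: H1; rewrite Hasc; lia.
- case=> HQ Ha Hs Hasc.
  have Hne : x != [::] by apply/eqP => Hx; move: Hs; rewrite Hx.
  case: ifP => Hv.
    split.
    + apply/Q_rcons => //; split=> //; [lia | exact: noN1_le1 | ].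
      have [->|Hv1] := eqVneq v 0; [exact: noN2_0 | apply: (noN2_bound Ha); lia].
    + by rewrite all_rcons Hv.
    + exact: subseq_trans Hs (subseq_rcons _ _).
    + exact: leq_trans Hasc (asc_rcons_ge _ _).
  split=> //; last by rewrite -size_eq0 size_rcons.
  apply/negP => /Q_rcons [] // _ _ H1 _.
  by apply: H1; exists 0, 1; split=> //; lia.
- case=> HQ Hs [c [Hc Hs2]].
  have Hne : x != [::] by apply/eqP => Hx; move: Hs; rewrite Hx.
  case: eqP => [Hv0|Hv0].
    split.
    + apply/Q_rcons => //; split=> //; [lia | apply: noN1_le1; lia | rewrite Hv0; exact: noN2_0].
    + exact: subseq_trans Hs (subseq_rcons _ _).
    + by exists c; split=> //; exact: subseq_trans Hs2 (subseq_rcons _ _).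
  split=> //; last by rewrite -size_eq0 size_rcons.
  apply/negP => /Q_rcons [] // _ _ H1 H2.
  have [Hv1|Hv1] : v = 1 \/ 1 < v by lia.
    by apply: H2; exists 0, c; rewrite Hv1; split=> //; lia.
  by apply: H1; exists 0, 1; split=> //; lia.
- case=> HQ Hne; split; last by rewrite -size_eq0 size_rcons.
  apply/negP => /Q_rcons [] // H _ _ _.
  by move: HQ; rewrite H.
Qed.

Lemma Inv_all x : Inv (st x) x.
Proof. elim/last_ind: x => [|x v IH] //; exact: Inv_step. Qed.

Definition alive s := if s is Dead then false else true.
Definition acc s := match s with P1 _ | SB | SC => true | _ => false end.

Lemma Q_st x : Q x = acc (st x).
Proof.
have := Inv_all x; case: (st x) => [|m|||] /=.
- by move=> ->.
- by case=> /andP [].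
- by case.
- by case.
- by case=> /negbTE.
Qed.

Definition nexts s : seq nat :=
  match s with
  | Init => [:: 0]
  | P1 m => if m == 0 then [:: 0; 1] else [:: m; m.+1; 0]
  | SB => [:: 0; 1]
  | SC => [:: 0]
  | Dead => [::]
  end.

Lemma alive_step s v : alive (step s v) = alive s && (v \in nexts s).
Proof.
case: s => [|[|m]|||] /=; rewrite ?inE.
- by case: eqP.
- by case: v => [|[|v]].
- by case: (v == m.+1); case: (v == m.+2); case: (v == 0); case: (m.+1 == 1).
- by case: v => [|[|v]].
- by case: v.
- by [].
Qed.

Fixpoint gen n : seq (seq nat) :=
  if n is n'.+1 then [seq rcons x v | x <- gen n', v <- nexts (st x)] else [:: [::]].

Lemma mem_gen n x : (x \in gen n) = (size x == n) && alive (st x).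
Proof.
elim: n x => [|n IH] x.
  by case: x.
apply/allpairsPdep/idP.
  case=> y [v [Hy Hv ->]]; move: Hy; rewrite IH => /andP [/eqP Hs Ha].
  by rewrite size_rcons Hs eqxx /st foldl_rcons -/(st y) alive_step Ha Hv.
case/lastP: x => [|y v] //.
rewrite size_rcons eqSS /st foldl_rcons -/(st y) alive_step => /andP [Hs /andP [Ha Hv]].
by exists y, v; rewrite IH Hs Ha.
Qed.

Lemma uniq_nexts s : uniq (nexts s).
Proof.
case: s => [|[|m]|||] //=.
by rewrite !inE !negb_or; apply/andP; split; [apply/andP; split|]; apply/eqP; lia.
Qed.

Lemma uniq_gen n : uniq (gen n).
Proof.
elim: n => [|n IH] //=.
apply: allpairs_uniq_dep => //; first by move=> x _; exact: uniq_nexts.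
move=> [x1 v1] [x2 v2] _ _ /= H.
by case: (rcons_inj H) => -> ->.
Qed.

Definition cl s : nat :=
  match s with
  | Init => 5 | P1 0 => 0 | P1 1 => 1 | P1 _ => 2 | SB => 3 | SC => 4 | Dead => 6
  end.

Lemma sum_class (F : state -> nat) (s : seq state) :
  (forall m, F (P1 m.+2) = F (P1 2)) -> all alive s ->
  sumn (map F s) = F Init * count (fun t => cl t == 5) s
    + F (P1 0) * count (fun t => cl t == 0) s + F (P1 1) * count (fun t => cl t == 1) s
    + F (P1 2) * count (fun t => cl t == 2) s + F SB * count (fun t => cl t == 3) s
    + F SC * count (fun t => cl t == 4) s.
Proof.
move=> HF; elim: s => [|a s IH] /=; first by rewrite !muln0.
case/andP=> Ha /IH ->.
case: a Ha => [|[|[|m]]|||] //= _; rewrite ?HF; nia.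
Qed.

Lemma count_allpairs (p : pred (seq nat)) (s : seq (seq nat)) (t : seq nat -> seq nat) :
  count p [seq rcons x v | x <- s, v <- t x] = sumn [seq count (fun v => p (rcons x v)) (t x) | x <- s].
Proof. by elim: s => //= x s IH; rewrite count_cat count_map IH. Qed.

Definition cnt n k := count (fun x => cl (st x) == k) (gen n).

Definition Fk k s := count (fun v => cl (step s v) == k) (nexts s).

Lemma gen_alive n : all alive (map st (gen n)).
Proof. by rewrite all_map; apply/allP => x; rewrite mem_gen => /andP [_ H]. Qed.

Lemma cnt_rec n k : cnt n.+1 k = Fk k Init * cnt n 5 + Fk k (P1 0) * cnt n 0
  + Fk k (P1 1) * cnt n 1 + Fk k (P1 2) * cnt n 2 + Fk k SB * cnt n 3 + Fk k SC * cnt n 4.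
Proof.
rewrite /cnt /= count_allpairs.
have -> : [seq count (fun v => cl (st (rcons x v)) == k) (nexts (st x)) | x <- gen n]
   = map (Fk k) (map st (gen n)).
  rewrite -map_comp; apply: eq_map => x /=.
  by rewrite /Fk; apply: eq_count => v; rewrite /st foldl_rcons.
rewrite sum_class ?gen_alive //; last first.
  move=> m; rewrite /Fk /=.
  rewrite !eqxx; have -> : (m.+3 == m.+2) = false by apply/eqP; lia.
  by [].
by rewrite !count_map.
Qed.

Lemma size_gen n : size (gen n.+1) = cnt n 5 + 2 * cnt n 0 + 3 * cnt n 1
  + 3 * cnt n 2 + 2 * cnt n 3 + cnt n 4.
Proof.
rewrite /= size_allpairs_dep.
have -> : [seq size (nexts (st x)) | x <- gen n] = map (size \o nexts) (map st (gen n)).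
  by rewrite -map_comp.
rewrite sum_class ?gen_alive //.
by rewrite /cnt !count_map /= !mul1n.
Qed.

Lemma cnt0 k : cnt 0 k = (k == 5).
Proof. by rewrite /cnt /= addn0 eq_sym. Qed.

Lemma cnt_closed j : [/\ cnt j.+1 5 = 0, cnt j.+1 0 = 1, cnt j.+1 1 = j &
  [/\ cnt j.+1 2 + j.+1 = 2 ^ j, cnt j.+1 3 + j.+1 = 2 ^ j &
  2 * cnt j.+1 4 + j * j.+1 + 2 = 2 ^ j.+1]].
Proof.
elim: j => [|j [H5 H0 H1 [H2 H3 H4]]].
  by rewrite !cnt_rec /Fk /= !cnt0.
rewrite !(cnt_rec j.+1) /Fk /= H5 H0 H1.
move: H2 H3 H4; rewrite !expnS; set P := 2 ^ j => H2 H3 H4.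
split; [lia|lia|lia|split; nia].
Qed.

Lemma formula n : 1 <= n -> 2 * size (gen n) = 3 * 2 ^ n - (n ^ 2 + n + 2).
Proof.
case: n => [|[|j]] // _.
have [H5 H0 H1 [H2 H3 H4]] := cnt_closed j.
rewrite size_gen H5 H0 H1.
move: H2 H3 H4; rewrite !expnS; set P := 2 ^ j => H2 H3 H4.
rewrite expn0 muln1; nia.
Qed.

Lemma step_not_init s v : step s v <> Init.
Proof.
by case: s => [|m|||] /=; repeat case: ifP => //; discriminate.
Qed.

Lemma alive_acc x : 0 < size x -> alive (st x) -> acc (st x).
Proof.
case/lastP: x => [|y v] // _; rewrite /st foldl_rcons.
by case E: (step _ v) => //; have := @step_not_init (foldl step Init y) v; rewrite E.
Qed.

Lemma entries_lt x : Q x -> all (fun a => a < size x) x.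
Proof.
case/andP; rewrite is_asc_alt => /and3P [Hs H0 /allP Ha] _.
apply/(all_nthP 0) => i Hi.
case: i Hi => [|i] Hi; first by rewrite (eqP H0).
have := Ha i.+1; rewrite mem_iota /= => /(_ _) H.
have {H} H : nth 0 x i.+1 <= (asc (take i.+1 x)).+1 by apply: H; lia.
have := asc_le (take i.+1 x); rewrite size_take Hi; lia.
Qed.

Lemma aP_gen n : 0 < n -> aP [:: [:: 0; 1; 0; 2]; [:: 0; 1; 2; 1]] n = size (gen n).
Proof.
case: n => [|k] // _.
rewrite /aP cardE.
rewrite -(size_map (fun t : k.+1.-tuple 'I_k.+1 => map val t)).
apply: perm_size; apply: uniq_perm.
- rewrite map_inj_uniq ?enum_uniq //.
  move=> t1 t2 /= H; apply: val_inj; exact: (inj_map val_inj) H.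
- exact: uniq_gen.
move=> y; apply/mapP/idP.
  case=> t; rewrite mem_enum inE => HQ ->.
  rewrite mem_gen size_map size_tuple eqxx /=.
  have : Q (map val t) by [].
  by rewrite Q_st; case: (st _).
rewrite mem_gen => /andP [/eqP Hs Ha].
have HQ : Q y by rewrite Q_st alive_acc // Hs.
have Hlt := entries_lt HQ; rewrite Hs in Hlt.
have Ht : size (map (@inord k) y) == k.+1 by rewrite size_map Hs.
have Ey : map val (Tuple Ht) = y.
  rewrite /= -map_comp; apply: map_id_in => a Ha' /=.
  by rewrite inordK //; exact: (allP Hlt).
exists (Tuple Ht) => //.
by rewrite mem_enum inE Ey.
Qed.

Theorem theorem3p5 (n : nat) : 1 <= n ->
  2 * aP [:: [:: 0; 1; 0; 2]; [:: 0; 1; 2; 1]] n = 3 * 2 ^ n - (n ^ 2 + n + 2).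
Proof. by move=> Hn; rewrite aP_gen // formula. Qed.
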